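(* For either choice $\zeta\in\{q,-q^3\}$, the function $\mathcal{F}(\lambda_1,\dots,\lambda_{L-1}\mid v_1,v_2)=\langle\bar0|\mathcal{E}(\lambda_{L-1})\cdots\mathcal{E}(\lambda_1)\mathcal{B}(v_2)\mathcal{B}(v_1)|0\rangle$ can be written as $\mathcal{F}(\lambda_1,\dots,\lambda_{L-1}\mid v_1,v_2)=\omega(y_1)\,\mathcal{H}(\lambda_1,\dots,\lambda_{L-1}\mid v_1,v_2)$ with $y_1=e^{2v_1}$, $\omega(y)=\prod_{j=1}^L(y-e^{2\mu_j}\zeta)$, where $\mathcal{H}$ is a polynomial of degree $L-1$ in $y_1$ and has the same dependence on the other variables as $\mathcal{F}$ (i.e. it is a polynomial of degree $2L-1$ in each $x_i=e^{2\lambda_i}$ and in $y_2=e^{2v_2}$).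
   Context: Let $q\in\mathbb{C}\setminus\{0\}$ (with a fixed choice of $q^{1/2}$) and $\zeta\in\{q,-q^3\}$ ($\zeta=q$: Fateev–Zamolodchikov model; $\zeta=-q^3$: Izergin–Korepin model). For $\lambda\in\mathbb{C}$ put $x=e^{2\lambda}$ and define $a(\lambda)=(x-\zeta)(x-q^2)$, $b(\lambda)=q(x-1)(x-\zeta)$, $c(\lambda)=(1-q^2)(x-\zeta)$, $\bar c(\lambda)=x(1-q^2)(x-\zeta)$, and for $\alpha,\beta\in\{1,2,3\}$, with $\beta'=4-\beta$: $d_{\alpha,\beta}(\lambda)=q(x-1)(x-\zeta)+x(q^2-1)(\zeta-1)$ if $\alpha=\beta=2$; $d_{\alpha,\beta}(\lambda)=(x-1)[(x-\zeta)+x(q^2-1)]$ if $\alpha=\beta\neq 2$; $d_{\alpha,\beta}(\lambda)=(q^2-1)[\zeta(x-1)q^{(\alpha-\beta)/2}-\delta_{\alpha,\beta'}(x-\zeta)]$ if $\alpha<\beta$; $d_{\alpha,\beta}(\lambda)=x(q^2-1)[(x-1)q^{(\alpha-\beta)/2}-\delta_{\alpha,\beta'}(x-\zeta)]$ if $\alpha>\beta$. Let $e_1,e_2,e_3$ be the standard basis of $\mathbb{C}^3$ and $E_{\alpha,\beta}$ the unit matrices. Define $\mathcal{R}(\lambda)\in\mathrm{End}(\mathbb{C}^3\otimes\mathbb{C}^3)$ as the $9\times 9$ matrix in the ordered basis $e_1\otimes e_1,e_1\otimes e_2,e_1\otimes e_3,e_2\otimes e_1,e_2\otimes e_2,e_2\otimes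 e_3,e_3\otimes e_1,e_3\otimes e_2,e_3\otimes e_3$ (indices $1,\dots,9$) whose only nonzero entries (row, column) are: $(1,1)=a$; $(2,2)=b$, $(2,4)=c$; $(3,3)=d_{1,1}$, $(3,5)=d_{1,2}$, $(3,7)=d_{1,3}$; $(4,2)=\bar c$, $(4,4)=b$; $(5,3)=d_{2,1}$, $(5,5)=d_{2,2}$, $(5,7)=d_{2,3}$; $(6,6)=b$, $(6,8)=c$; $(7,3)=d_{3,1}$, $(7,5)=d_{3,2}$, $(7,7)=d_{3,3}$; $(8,6)=\bar c$, $(8,8)=b$; $(9,9)=a$ (all evaluated at $\lambda$). Fix $L\ge1$ and inhomogeneities $\mu_1,\dots,\mu_L\in\mathbb{C}$. With $V_a=V_1=\dots=V_L=\mathbb{C}^3$, let $\mathcal{T}(\lambda)=\mathcal{R}_{a1}(\lambda-\mu_1)\cdots\mathcal{R}_{aL}(\lambda-\mu_L)$, where $\mathcal{R}_{aj}$ acts as $\mathcal{R}$ on $V_a\otimes V_j$. Write $\mathcal{T}(\lambda)=\sum_{\alpha,\beta}E_{\alpha,\beta}\otimes\mathcal{T}_\alpha^\beta(\lambda)$ and set $\mathcal{B}(\lambda)=\mathcal{T}_1^2(\lambda)$, $\mathcal{E}(\lambda)=\mathcal{T}_1^3(\lambda)$, operators on $V_1\otimes\cdots\otimes V_L$. Let $|0\rangle=e_1^{\otimes L}$ and let $\langle\bar0|$ be the dual vector of $e_3^{\otimes L}$. *)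

(* Defs.v *)
From mathcomp Require Import all_boot all_algebra.
From mathcomp Require Import Rstruct complex.
From mathcomp Require Import mpoly.

Set Implicit Arguments.
Unset Strict Implicit.
Unset Printing Implicit Defensive.

Import GRing.Theory.
Local Open Scope ring_scope.

Definition CC : numClosedFieldType := complex Rdefinitions.R.

Section Model.

(* q, a fixed square root s = q^{1/2} of q, and zeta (= q or -q^3). *)
Variables (q s zeta : CC).

(* Entries of the R-matrix, written as functions of x = e^{2 lambda}. *)
Definition Ra (x : CC) : CC := (x - zeta) * (x - q ^+ 2).
Definition Rb (x : CC) : CC := q * (x - 1) * (x - zeta).
Definition Rc (x : CC) : CC := (1 - q ^+ 2) * (x - zeta).
Definition Rcbar (x : CC) : CC := x * (1 - q ^+ 2) * (x - zeta).

(* d_{al,be}(x) for al, be in {1,2,3}; q^{(al-be)/2} = s^(al-be). *)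
Definition Rd (al be : nat) (x : CC) : CC :=
  let delta : CC := if (al + be == 4)%N then 1 else 0 in
  if (al == be) then
    (if al == 2 then q * (x - 1) * (x - zeta) + x * (q ^+ 2 - 1) * (zeta - 1)
     else (x - 1) * ((x - zeta) + x * (q ^+ 2 - 1)))
  else if (al < be)%N then
    (q ^+ 2 - 1) * (zeta * (x - 1) * s ^- (be - al) - delta * (x - zeta))
  else
    x * (q ^+ 2 - 1) * ((x - 1) * s ^+ (al - be) - delta * (x - zeta)).

(* The 9x9 matrix R(lambda), entry (i, j) with 1-based indices i, j in 1..9
   (basis e_1(x)e_1, e_1(x)e_2, ..., e_3(x)e_3). *)
Definition Rmat (x : CC) (i j : nat) : CC :=
  match i, j with
  | 1, 1 => Ra x
  | 2, 2 => Rb x | 2, 4 => Rc x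
  | 3, 3 => Rd 1 1 x | 3, 5 => Rd 1 2 x | 3, 7 => Rd 1 3 x
  | 4, 2 => Rcbar x | 4, 4 => Rb x
  | 5, 3 => Rd 2 1 x | 5, 5 => Rd 2 2 x | 5, 7 => Rd 2 3 x
  | 6, 6 => Rb x | 6, 8 => Rc x
  | 7, 3 => Rd 3 1 x | 7, 5 => Rd 3 2 x | 7, 7 => Rd 3 3 x
  | 8, 6 => Rcbar x | 8, 8 => Rb x
  | 9, 9 => Ra x
  | _, _ => 0
  end.

(* Matrix element <e_a (x) e_s | R | e_b (x) e_t>, with 0-based a,s,b,t : 'I_3
   (e_{a+1} etc.); the row index of e_a (x) e_s is 3a + s + 1. *)
Definition Rent (x : CC) (a s b t : 'I_3) : CC :=
  Rmat x (3 * a + s + 1) (3 * b + t + 1).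

Variable L : nat.
(* w j = e^{2 mu_{j+1}} (the inhomogeneities), j : 'I_L. *)
Variable w : 'I_L -> CC.

(* Basis configurations of V_1 (x) ... (x) V_L:  e_{c 0 + 1} (x) ... *)
Definition cfg := {ffun 'I_L -> 'I_3}.

(* Operators on V_1 (x) ... (x) V_L, as matrices indexed by configurations:
   A sigma tau = <e_sigma | A | e_tau>. *)
Definition op := cfg -> cfg -> CC.

Definition opmul (A B : op) : op := fun sg tau => \sum_(rho : cfg) A sg rho * B rho tau.
Definition op1 : op := fun sg tau => if sg == tau then 1 else 0.

(* Entry T_al^be(lambda) of the monodromy matrix
   T(lambda) = R_{a1}(lambda - mu_1) ... R_{aL}(lambda - mu_L), with x = e^{2 lambda};
   R(lambda - mu_j) is evaluated at e^{2(lambda - mu_j)} = x / w_j. *)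
Definition Tmon (al be : 'I_3) (x : CC) : op := fun sg tau =>
  \sum_(p : {ffun 'I_L.+1 -> 'I_3} | (p ord0 == al) && (p ord_max == be))
     \prod_(j : 'I_L) Rent (x / w j) (p (widen_ord (leqnSn L) j)) (sg j)
                                      (p (lift ord0 j)) (tau j).

Definition i1 : 'I_3 := @Ordinal 3 0 isT.
Definition i2 : 'I_3 := @Ordinal 3 1 isT.
Definition i3 : 'I_3 := @Ordinal 3 2 isT.

(* B = T_1^2, E = T_1^3. *)
Definition Bop (x : CC) : op := Tmon i1 i2 x.
Definition Eop (x : CC) : op := Tmon i1 i3 x.

(* |0> = e_1^{(x) L},  <0bar| = dual of e_3^{(x) L}. *)
Definition vac : cfg := [ffun => i1].
Definition dvac : cfg := [ffun => i3].

(* F(lambda_1..lambda_{L-1} | v_1, v_2)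
     = <0bar| E(lambda_{L-1}) ... E(lambda_1) B(v_2) B(v_1) |0>,
   with x i = e^{2 lambda_i} (i = 1..L-1), y1 = e^{2 v_1}, y2 = e^{2 v_2}. *)
Definition Fpf (x : nat -> CC) (y1 y2 : CC) : CC :=
  foldr opmul op1
    ([seq Eop (x i) | i <- rev (iota 1 L.-1)] ++ [:: Bop y2; Bop y1]) dvac vac.

Definition omega (y : CC) : CC := \prod_(j : 'I_L) (y - w j * zeta).

Definition Hvars (x : nat -> CC) (y1 y2 : CC) (k : 'I_L.+1) : CC :=
  if (k < L.-1)%N then x k.+1 else if (k == L.-1 :> nat) then y1 else y2.

End Model.

(* Main.v *)
Require Import Defs.
From mathcomp Require Import all_boot all_algebra.
From mathcomp Require Import Rstruct complex.
From mathcomp Require Import mpoly.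
From mathcomp Require Import ring.
From mathcomp Require Import zify.
From Stdlib Require Import FunctionalExtensionality.
Set Implicit Arguments. Unset Strict Implicit. Unset Printing Implicit Defensive.
Import GRing.Theory.
Local Open Scope ring_scope.

Section Deg.
Variable n : nat.
Local Notation MP := {mpoly CC[n]}.
Definition dk (k : 'I_n) (d : nat) (p : MP) := forall m, m \in msupp p -> (m k <= d)%N.

Lemma dk_mono k d d' p : (d <= d')%N -> dk k d p -> dk k d' p.
Proof. by move=> h H m /H /leq_trans; apply. Qed.
Lemma dk0 k d : dk k d 0.
Proof. by move=> m; rewrite msupp0. Qed.
Lemma dkC k c : dk k 0 c%:MP.
Proof. by move=> m; rewrite msuppC; case: eqP => // _; rewrite inE => /eqP ->; rewrite mnm0E. Qed.
Lemma dk1 k : dk k 0 1.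
Proof. exact: dkC. Qed.
Lemma dkD k d p q : dk k d p -> dk k d q -> dk k d (p + q).
Proof. by move=> hp hq m /msuppD_le; rewrite mem_cat => /orP [/hp|/hq]. Qed.
Lemma dkN k d p : dk k d p -> dk k d (- p).
Proof. by move=> hp m; rewrite (perm_mem (msuppN p)) => /hp. Qed.
Lemma dkM k d1 d2 p q : dk k d1 p -> dk k d2 q -> dk k (d1 + d2) (p * q).
Proof.
move=> hp hq m /msuppM_le /allpairsP [[m1 m2] /= [/hp h1 /hq h2 ->]].
by rewrite mnmDE leq_add.
Qed.
Lemma dkX k i : dk k (i == k) 'X_i.
Proof. by move=> m; rewrite msuppX inE => /eqP ->; rewrite mnm1E. Qed.
Lemma dk_sum (I : Type) (r : seq I) (P : pred I) (F : I -> MP) k d :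
  (forall i, P i -> dk k d (F i)) -> dk k d (\sum_(i <- r | P i) F i).
Proof.
move=> h; elim: r => [|x r ih]; first by rewrite big_nil; exact: dk0.
by rewrite big_cons; case: ifP => // Px; apply: dkD => //; apply: h.
Qed.
End Deg.

Section Coef.
Variables (q s zeta : CC).
Definition rc (k i j : nat) : CC :=
  let c0 a b c := match k with 0 => a | 1 => b | _ => c end in
  match i, j with
  | 1, 1 | 9, 9 => c0 (zeta * q^+2) (-(zeta + q^+2)) 1
  | 2, 2 | 4, 4 | 6, 6 | 8, 8 => c0 (q * zeta) (-(q * (1 + zeta))) q
  | 2, 4 | 6, 8 => c0 (-((1 - q^+2) * zeta)) (1 - q^+2) 0
  | 4, 2 | 8, 6 => c0 0 (-((1 - q^+2) * zeta)) (1 - q^+2)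
  | 3, 3 | 7, 7 => c0 zeta (-(q^+2 + zeta)) (q^+2)
  | 5, 5 => c0 (q * zeta) (-(q * (1 + zeta)) + (q^+2 - 1) * (zeta - 1)) q
  | 3, 5 | 5, 7 => c0 (-((q^+2 - 1) * zeta * s ^- 1)) ((q^+2 - 1) * zeta * s ^- 1) 0
  | 3, 7 => c0 ((q^+2 - 1) * (zeta - zeta * s ^- 2)) ((q^+2 - 1) * (zeta * s ^- 2 - 1)) 0
  | 5, 3 | 7, 5 => c0 0 (-((q^+2 - 1) * s ^+ 1)) ((q^+2 - 1) * s ^+ 1)
  | 7, 3 => c0 0 ((q^+2 - 1) * (zeta - s ^+ 2)) ((q^+2 - 1) * (s ^+ 2 - 1))
  | _, _ => 0
  end.

Lemma Rmat_coef x i j : Rmat q s zeta x i j = rc 0 i j + rc 1 i j * x + rc 2 i j * x ^+ 2.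
Proof.
do 10?[case: i => [|i]]; do 10?[case: j => [|j]];
  rewrite /Rmat /rc /Rd /Ra /Rb /Rc /Rcbar /=; ring.
Qed.
End Coef.

Section Coef2.
Variables (q s zeta : CC).
Definition rr (k i j : nat) : CC :=
  match i, j with
  | 1, 1 => if k is 0 then - q ^+ 2 else 1
  | 2, 4 => if k is 0 then 1 - q ^+ 2 else 0
  | 4, 4 => if k is 0 then - q else q
  | _, _ => 0
  end.

Lemma Rmat_red x (a u b : 'I_3) : b != i3 ->
  Rmat q s zeta x (3 * a + u + 1) (3 * b + i1 + 1) =
  (x - zeta) * (rr 0 (3 * a + u + 1) (3 * b + i1 + 1) + rr 1 (3 * a + u + 1) (3 * b + i1 + 1) * x).
Proof.
case: a => [[|[|[|a]]] Ha] //; case: u => [[|[|[|u]]] Hu] //; case: b => [[|[|[|b]]] Hb] //=;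
  rewrite /Rmat /rr /Ra /Rb /Rc /Rcbar /Rd /=; (try by []); move=> _; ring.
Qed.

Lemma Rmat_zero x (a u b : 'I_3) : (b < a)%N ->
  Rmat q s zeta x (3 * a + u + 1) (3 * b + i1 + 1) = 0 /\
  forall k, rr k (3 * a + u + 1) (3 * b + i1 + 1) = 0.
Proof.
by case: a => [[|[|[|a]]] Ha] //; case: u => [[|[|[|u]]] Hu] //; case: b => [[|[|[|b]]] Hb] //=.
Qed.

Lemma rr1_zero (a u b : 'I_3) : (a < b)%N -> rr 1 (3 * a + u + 1) (3 * b + i1 + 1) = 0.
Proof.
by case: a => [[|[|[|a]]] Ha] //; case: u => [[|[|[|u]]] Hu] //; case: b => [[|[|[|b]]] Hb] //=.
Qed.
End Coef2.

Lemma rc2_zero q s zeta (a u b t : 'I_3) : (a < b)%N -> rc q s zeta 2 (3 * a + u + 1) (3 * b + t + 1) = 0.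
Proof.
by case: a => [[|[|[|a]]] Ha] //; case: u => [[|[|[|u]]] Hu] //; case: b => [[|[|[|b]]] Hb] //=;
  case: t => [[|[|[|t]]] Ht].
Qed.

Section Gen.
Variables (R : comPzRingType) (L : nat).
Definition Ent := 'I_L -> 'I_3 -> 'I_3 -> 'I_3 -> 'I_3 -> R.
Definition Tg (ent : Ent) (al be : 'I_3) (sg tau : cfg L) : R :=
  \sum_(p : {ffun 'I_L.+1 -> 'I_3} | (p ord0 == al) && (p ord_max == be))
     \prod_(j : 'I_L) ent j (p (widen_ord (leqnSn L) j)) (sg j)
                                      (p (lift ord0 j)) (tau j).
Definition app (A : cfg L -> cfg L -> R) (v : cfg L -> R) (sg : cfg L) : R :=
  \sum_(rho : cfg L) A sg rho * v rho.
Definition appl (l : seq (cfg L -> cfg L -> R)) (v : cfg L -> R) := foldr app v l.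

Lemma appl_cat l1 l2 v : appl (l1 ++ l2) v = appl l1 (appl l2 v).
Proof. exact: foldr_cat. Qed.

Lemma app_scale A c v : app A (fun r => c * v r) = fun sg => c * app A v sg.
Proof.
apply: functional_extensionality => sg; rewrite /app mulr_sumr.
by apply: eq_bigr => r _; rewrite mulrCA.
Qed.

Lemma appl_scale l c v : appl l (fun r => c * v r) = fun sg => c * appl l v sg.
Proof. by elim: l => [//|A l IH] /=; rewrite IH app_scale. Qed.
End Gen.

Lemma morph_Tg (R S : comPzRingType) L (f : {rmorphism R -> S}) (ent : Ent R L) al be sg tau :
  f (Tg ent al be sg tau) = Tg (fun j a u b t => f (ent j a u b t)) al be sg tau.
Proof. rewrite rmorph_sum; apply: eq_bigr => p _; by rewrite rmorph_prod. Qed.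

Lemma morph_appl (R S : comPzRingType) L (f : {rmorphism R -> S}) l (v : cfg L -> R) sg :
  f (appl l v sg) = appl (map (fun A a b => f (A a b)) l) (fun r => f (v r)) sg.
Proof.
elim: l sg => [//|A l IH] sg /=; rewrite /app rmorph_sum.
by apply: eq_bigr => r _; rewrite rmorphM IH.
Qed.

Lemma foldr_opmul L (l : seq (op L)) (sg tau : cfg L) :
  foldr (@opmul L) (@op1 L) l sg tau = appl l (fun r => op1 r tau) sg.
Proof.
elim: l sg => [//|A l IH] sg /=; rewrite /opmul /app.
by apply: eq_bigr => r _; rewrite IH.
Qed.

Lemma widen_inord L (j : 'I_L) : widen_ord (leqnSn L) j = inord j.
Proof. by apply/val_inj; rewrite /= inordK // ltnS ltnW. Qed.
Lemma lift_inord L (j : 'I_L) : lift ord0 j = inord j.+1.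
Proof. by apply/val_inj; rewrite /= inordK // /bump /=; rewrite ltnS. Qed.
Lemma ord0_inord L : (ord0 : 'I_L.+1) = inord 0.
Proof. by apply/val_inj; rewrite /= inordK. Qed.
Lemma ordmax_inord L : (ord_max : 'I_L.+1) = inord L.
Proof. by apply/val_inj; rewrite /= inordK. Qed.

Lemma ascent L (p : {ffun 'I_L.+1 -> 'I_3}) : (p ord0 < p ord_max)%N ->
  exists j : 'I_L, (p (widen_ord (leqnSn L) j) < p (lift ord0 j))%N.
Proof.
move=> H.
have [/existsP //|] := boolP [exists j : 'I_L, (p (widen_ord (leqnSn L) j) < p (lift ord0 j))%N].
rewrite negb_exists => /forallP Hn; exfalso.
pose g n := nat_of_ord (p (inord n)).
have Hg : forall n, (n < L)%N -> (g n.+1 <= g n)%N.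
  move=> n Hn'; have := Hn (Ordinal Hn'); rewrite -leqNgt widen_inord lift_inord.
  by rewrite /g.
have : forall n, (n <= L)%N -> (g n <= g 0)%N.
  elim=> // n IHn Hn'; exact: leq_trans (Hg n Hn') (IHn (ltnW Hn')).
move=> /(_ L (leqnn L)); rewrite /g -ord0_inord -ordmax_inord.
by rewrite leqNgt H.
Qed.

Lemma monotone L (p : {ffun 'I_L.+1 -> 'I_3}) :
  (forall j : 'I_L, (p (widen_ord (leqnSn L) j) <= p (lift ord0 j))%N) ->
  forall j : 'I_L, (p (lift ord0 j) <= p ord_max)%N.
Proof.
move=> Hn.
pose g n := nat_of_ord (p (inord n)).
have Hg : forall n, (n < L)%N -> (g n <= g n.+1)%N.
  move=> n Hn'; have := Hn (Ordinal Hn'); rewrite widen_inord lift_inord.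
  by rewrite /g.
have : forall m n, (n + m = L)%N -> (g n <= g L)%N.
  elim=> [|m IHm] n e; first by rewrite addn0 in e; rewrite e.
  apply: leq_trans (Hg n _) (IHm n.+1 _); first by rewrite -e; rewrite addnS ltnS leq_addr.
  by rewrite addSn -addnS.
move=> H j; rewrite lift_inord ordmax_inord.
apply: (H (L - j.+1)%N); rewrite subnKC //.
Qed.

Section DegT.
Variable n : nat.
Local Notation MP := {mpoly CC[n]}.

Lemma dk_prod (I : Type) (r : seq I) (P : pred I) (F : I -> MP) k d :
  (forall i, P i -> dk k d (F i)) -> dk k (\sum_(i <- r | P i) d)%N (\prod_(i <- r | P i) F i).
Proof.
move=> h; elim: r => [|x r ih]; first by rewrite !big_nil; exact: dk1.
by rewrite !big_cons; case: ifP => // Px; apply: dkM => //; apply: h.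
Qed.

Lemma dk_Tg L (ent : Ent MP L) k n1 n2 (al be : 'I_3) sg tau :
  (forall j a u b t, dk k n2 (ent j a u b t)) ->
  (forall j (a u b t : 'I_3), (a < b)%N -> dk k n1 (ent j a u b t)) -> (nat_of_ord al < nat_of_ord be)%N ->
  dk k (n1 + L.-1 * n2) (Tg ent al be sg tau).
Proof.
move=> h2 h1 hab; apply: dk_sum => p /andP[/eqP p0 /eqP pL].
have [j hj] : exists j : 'I_L, (p (widen_ord (leqnSn L) j) < p (lift ord0 j))%N by apply: ascent; rewrite p0 pL.
rewrite (bigD1 j) //=; apply: dkM; first exact: h1.
have -> : (L.-1 * n2 = \sum_(i < L | i != j) n2)%N by rewrite sum_nat_const cardC1 card_ord mulnC.
apply: dk_prod => i _; exact: h2.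
Qed.

Lemma dk_app L (A : cfg L -> cfg L -> MP) v k d1 d2 sg :
  (forall a b, dk k d1 (A a b)) -> (forall r, dk k d2 (v r)) -> dk k (d1 + d2) (app A v sg).
Proof. by move=> hA hv; apply: dk_sum => r _; apply: dkM. Qed.

Lemma dk_applmap L (I : eqType) (sI : seq I) (EP : I -> cfg L -> cfg L -> MP) (d : I -> nat) v k dv sg :
  (forall i, i \in sI -> forall a b, dk k (d i) (EP i a b)) -> (forall r, dk k dv (v r)) ->
  dk k (dv + \sum_(i <- sI) d i)%N (appl (map EP sI) v sg).
Proof.
elim: sI sg => [|i sI IH] sg hE hv /=; first by rewrite big_nil addn0.
rewrite big_cons addnCA; apply: dk_app => [|r]; first by apply: hE; rewrite mem_head.
by apply: IH => // j hj; apply: hE; rewrite inE hj orbT.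
Qed.
End DegT.

Section Ents.
Variables (q s zeta : CC) (L : nat) (w : 'I_L -> CC).

Definition entC (x : CC) : Ent CC L := fun j a u b t => Rent q s zeta (x / w j) a u b t.
Definition entP n (X : {mpoly CC[n]}) : Ent {mpoly CC[n]} L := fun j a u b t =>
  (rc q s zeta 0 (3 * a + u + 1) (3 * b + t + 1))%:MP
  + (rc q s zeta 1 (3 * a + u + 1) (3 * b + t + 1))%:MP * (X * ((w j)^-1)%:MP)
  + (rc q s zeta 2 (3 * a + u + 1) (3 * b + t + 1))%:MP * (X * ((w j)^-1)%:MP) ^+ 2.
Definition entVC (y : CC) : Ent CC L := fun j a u b t =>
  rr q 0 (3 * a + u + 1) (3 * b + i1 + 1) + rr q 1 (3 * a + u + 1) (3 * b + i1 + 1) * (y / w j).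
Definition entVP n (X : {mpoly CC[n]}) : Ent {mpoly CC[n]} L := fun j a u b t =>
  (rr q 0 (3 * a + u + 1) (3 * b + i1 + 1))%:MP
  + (rr q 1 (3 * a + u + 1) (3 * b + i1 + 1))%:MP * (X * ((w j)^-1)%:MP).

Lemma entP_eval n (X : {mpoly CC[n]}) v j a u b t :
  (entP X j a u b t).@[v] = entC X.@[v] j a u b t.
Proof.
by rewrite /entP /entC /Rent expr2 !mevalD !mevalM !mevalC Rmat_coef expr2.
Qed.

Lemma entVP_eval n (X : {mpoly CC[n]}) v j a u b t :
  (entVP X j a u b t).@[v] = entVC X.@[v] j a u b t.
Proof. by rewrite /entVP /entVC !mevalD !mevalM !mevalC. Qed.



Lemma dkC' n (k : 'I_n) d (c : CC) : dk k d c%:MP.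
Proof. exact: (dk_mono (leq0n d) (dkC k (c := c))). Qed.

Lemma dk_le n (k : 'I_n) d d' p : dk k d p -> (d <= d')%N -> dk k d' p.
Proof. by move=> h h'; apply: dk_mono h' h. Qed.

Lemma dk_entP n (X : {mpoly CC[n]}) k d : dk k d X ->
  (forall j a u b t, dk k (2 * d) (entP X j a u b t)) /\
  (forall j (a u b t : 'I_3), (a < b)%N -> dk k d (entP X j a u b t)).
Proof.
move=> hX.
have hY : forall j, dk k d (X * ((w j)^-1)%:MP).
  by move=> j; rewrite -[d]addn0; apply: dkM => //; apply: dkC.
split=> j a u b t.
  apply: dkD; first apply: dkD.
  - by apply: dkC'.
  - by apply: dk_le (dkM (@dkC _ k _) (hY j)) _; rewrite add0n mul2n -addnn leq_addr.
  - have hYY : dk k (d + d) ((X * ((w j)^-1)%:MP) ^+ 2) by rewrite expr2; apply: dkM.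
    by apply: dk_le (dkM (@dkC _ k _) hYY) _; rewrite add0n mul2n addnn.
move=> hab; rewrite /entP rc2_zero // mpolyC0 mul0r addr0.
apply: dkD; first by apply: dkC'.
by apply: dk_le (dkM (@dkC _ k _) (hY j)) _.
Qed.

Lemma dk_entVP n (X : {mpoly CC[n]}) k d : dk k d X ->
  (forall j a u b t, dk k d (entVP X j a u b t)) /\
  (forall j (a u b t : 'I_3), (a < b)%N -> dk k 0 (entVP X j a u b t)).
Proof.
move=> hX.
have hY : forall j, dk k d (X * ((w j)^-1)%:MP).
  by move=> j; rewrite -[d]addn0; apply: dkM => //; apply: dkC.
split=> j a u b t.
  apply: dkD; first by apply: dkC'.
  by apply: dk_le (dkM (@dkC _ k _) (hY j)) _.
move=> hab; rewrite /entVP rr1_zero // mpolyC0 mul0r addr0; exact: dkC.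
Qed.

Lemma prod_omega y : (forall j, w j != 0) ->
  \prod_(j : 'I_L) (y / w j - zeta) = omega zeta w y * \prod_(j : 'I_L) (w j)^-1.
Proof.
move=> hw; rewrite /omega -big_split; apply: eq_bigr => j _ /=.
by rewrite mulrBl [w j * zeta]mulrC -mulrA divff // mulr1.
Qed.

Lemma Bvac y (rho : cfg L) :
  Bop q s zeta w y rho (vac L) = (\prod_(j : 'I_L) (y / w j - zeta)) * Tg (entVC y) i1 i2 rho (vac L).
Proof.
rewrite /Bop /Tmon /Tg mulr_sumr; apply: eq_bigr => p /andP[/eqP p0 /eqP pL].
case: (boolP [forall j : 'I_L, (p (widen_ord (leqnSn L) j) <= p (lift ord0 j))%N]) => [/forallP mono|].
  have hb : forall j, p (lift ord0 j) != i3.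
    move=> j; have := monotone mono j; rewrite pL.
    by apply: contraTneq => ->.
  rewrite -big_split /=; apply: eq_bigr => j _; rewrite /entVC /Rent ffunE.
  by rewrite Rmat_red.
rewrite negb_forall => /existsP [j]; rewrite -ltnNge => hj.
rewrite (bigD1 j) //= [X in _ = _ * X](bigD1 j) //= /entVC /Rent ffunE.
have [-> h2] := @Rmat_zero q s zeta (y / w j) _ (rho j) _ hj.
by rewrite !h2 !mul0r add0r mul0r mulr0.
Qed.
End Ents.

Theorem corollary2p4 (q s zeta : CC) (L : nat) (w : 'I_L -> CC) :
  q != 0 -> s ^+ 2 = q -> (zeta = q \/ zeta = - q ^+ 3) ->
  (1 <= L)%N -> (forall j, w j != 0) ->
  exists H : {mpoly CC[L.+1]},
    (forall m, m \in msupp H ->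
       forall k : 'I_L.+1,
         (m k <= (if k == L.-1 :> nat then L.-1 else (2 * L).-1))%N) /\
    (forall (x : nat -> CC) (y1 y2 : CC),
       (forall i, (1 <= i <= L.-1)%N -> x i != 0) -> y1 != 0 -> y2 != 0 ->
       Fpf q s zeta w x y1 y2 = omega zeta w y1 * H.@[Hvars x y1 y2]).
Proof.
move=> _ _ _ hL hw.
pose cst := \prod_(j : 'I_L) (w j)^-1.
pose EP (i : nat) := Tg (entP q s zeta w ('X_(inord i.-1) : {mpoly CC[L.+1]})) i1 i3.
pose BP := Tg (entP q s zeta w ('X_ord_max : {mpoly CC[L.+1]})) i1 i2.
pose VP (r : cfg L) := Tg (entVP q w ('X_(inord L.-1) : {mpoly CC[L.+1]})) i1 i2 r (vac L).
pose sI := rev (iota 1 L.-1).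
exists (cst%:MP * appl (map EP sI ++ [:: BP]) VP (dvac L)).
split.
  move=> m hm k.
  suff hd : dk k (if k == L.-1 :> nat then L.-1 else (2 * L).-1) (cst%:MP * appl (map EP sI ++ [:: BP]) VP (dvac L)).
    exact: hd m hm.
  rewrite -[X in dk k X _]add0n; apply: dkM; first exact: dkC.
  rewrite appl_cat; change (appl [:: BP] VP) with (app BP VP).
  pose dV := if k == L.-1 :> nat then L.-1 else 0%N.
  pose dB := if k == L :> nat then (2 * L).-1 else 0%N.
  pose dE i := if i == k.+1 then (2 * L).-1 else 0%N.
  have h := @dk_applmap (L.+1) L nat sI EP dE (app BP VP) k (dB + dV) (dvac L).
  apply: dk_le (h _ _) _.
  - move=> i; rewrite mem_rev mem_iota => /andP[hi1 hi2] a b.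
    have hX := @dkX _ k (inord i.-1 : 'I_L.+1).
    have [h2 h1] := dk_entP q s zeta w hX.
    apply: dk_le (dk_Tg h2 h1 _) _ => //.
    rewrite /dE; case: eqP => [<-|hne]; last by rewrite /= !muln0.
    rewrite inordK ?prednK ?eqxx /=; lia.
  - move=> r; apply: dk_app => [a b|r'].
      have hX := @dkX _ k (ord_max : 'I_L.+1).
      have [h2 h1] := dk_entP q s zeta w hX.
      apply: dk_le (dk_Tg h2 h1 _) _ => //.
      rewrite /dB; case: eqP => [<-|hne]; last by rewrite /= !muln0.
      rewrite /= eqxx; lia.
    have hX := @dkX _ k (inord L.-1 : 'I_L.+1).
    have [h2 h1] := dk_entVP q w hX.
    apply: dk_le (dk_Tg h2 h1 _) _ => //.
    rewrite /dV; case: eqP => [<-|hne]; last by rewrite /= !muln0.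
    rewrite /= inordK ?eqxx; lia.
  have hS : (\sum_(i <- sI) dE i = (k.+1 \in sI) * (2 * L).-1)%N.
    rewrite /dE -big_mkcond big_const_seq iter_addn_0 mulnC; congr (_ * _)%N.
    by rewrite -(count_uniq_mem _ (_ : uniq sI)) // /sI rev_uniq iota_uniq.
  rewrite hS /dB /dV mem_rev mem_iota.
  have := ltn_ord k.
  case: (ltnP k L.-1) => hk; rewrite ?andbT ?andbF /=.
    have -> : (k == L.-1 :> nat) = false by apply/eqP; lia.
    have -> : (k == L :> nat) = false by apply/eqP; lia.
    lia.
  case: eqP => e1; case: eqP => e2; lia.
move=> x y1 y2 _ _ _.
rewrite mevalM mevalC morph_appl map_cat appl_cat /=.
rewrite /Fpf foldr_opmul appl_cat /=.
have e1 : app (Bop q s zeta w y1) (fun r => op1 r (vac L)) =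
    fun r => (omega zeta w y1 * cst) * Tg (entVC q w y1) i1 i2 r (vac L).
  apply: functional_extensionality => r.
  rewrite /app (bigD1 (vac L)) //= /op1 eqxx mulr1 big1 ?addr0 => [|r' /negbTE ->]; last by rewrite mulr0.
  by rewrite Bvac prod_omega.
rewrite e1 app_scale appl_scale [RHS]mulrA; congr (_ * appl _ _ _).
- rewrite /sI -map_comp; apply/eq_in_map => i; rewrite mem_rev mem_iota => /andP[hi1 hi2].
  apply: functional_extensionality => a; apply: functional_extensionality => b.
  rewrite /= /EP morph_Tg /Eop /Tmon /Tg; apply: eq_bigr => p _; apply: eq_bigr => j _.
  rewrite /= entP_eval mevalXU /Hvars inordK; last by lia.
  by rewrite ifT ?prednK //; lia.
- have -> : (fun a b : cfg L => (BP a b).@[Hvars x y1 y2]) = Bop q s zeta w y2.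
    apply: functional_extensionality => a; apply: functional_extensionality => b.
    rewrite /BP morph_Tg /Bop /Tmon /Tg; apply: eq_bigr => p _; apply: eq_bigr => j _.
    rewrite /= entP_eval mevalXU /Hvars /= ifF; last by lia.
    by rewrite ifF //; lia.
  congr app; apply: functional_extensionality => r.
  rewrite /VP morph_Tg /= /Tg; apply: eq_bigr => p _; apply: eq_bigr => j _.
  rewrite entVP_eval mevalXU /Hvars inordK; last by lia.
  by rewrite ltnn eqxx.
Qed.
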